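(* Let $\tau_i$ be an HC task that switches to HC mode at time $t_i\le t$, and suppose $t-t_i\ge D_i$. Then $\tau_i$ generates maximal demand during $[0,t)$ when its first job is released at time $t-D_i-\lfloor (t-D_i)/T_i\rfloor\cdot T_i$ and all successive jobs are released as soon as possible (every $T_i$ time units thereafter).
   Context: A mixed-criticality sporadic task is $\tau_i=(T_i,L_i,\{C_i^L,C_i^H\},D_i)$: jobs are released with minimum separation $T_i$, $L_i\in\{LC,HC\}$, $D_i\le T_i$ is the relative deadline, and $C_i^L<C_i^H$ for HC tasks. Each task has a tightened deadline $D_i^L\le D_i$. An HC task is in LC mode until the instant $t_i$ at which some job requests to execute for more than $C_i^L$; from then on it is in HC mode. While in LC mode, a job released at $r$ must receive $C_i^L$ time units by $r+D_i^L$; once the task is in HC mode, a job may require up to $C_i^H$ units in total, to be received by its actual deadline $r+D_i$. The demand of a task during $[0,t)$ is the amount of execution that must be completed within $[0,t)$ in order to meet all of its deadlines that fall in $[0,t)$; execution with deadline after $t$ contributes no demand. ''Maximal demand'' is over all legal release sequences (minimum separation $T_i$) and all legal execution behaviours. *)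

(* Defs.v *)
From mathcomp Require Import all_boot all_order all_algebra.
Set Implicit Arguments. Unset Strict Implicit. Unset Printing Implicit Defensive.
Import Order.TTheory GRing.Theory Num.Theory.
Local Open Scope ring_scope.

(* A release sequence of a sporadic task: r k is the release time of the k-th
   job; releases are non-negative and separated by at least T.  (A task that
   stops releasing is modelled by pushing the remaining releases beyond the
   horizon t; they then contribute no demand.) *)
Definition legal_release (R : archiRealFieldType) (T : R) (r : nat -> R) : Prop :=
  0 <= r 0%N /\ forall k : nat, r k + T <= r k.+1.

(* Job k is in LC mode (an "LC job") iff its tightened (LC) deadline r k + DL
   lies at or before the mode switch instant ti; it must then receive its LC
   budget by r k + DL.  All other jobs (active at, or released after, the
   switch) are handled in HC mode: up to CH units by the actual deadline r k + D. *)
Definition lc_job (R : archiRealFieldType) (DL ti : R) (r : nat -> R) (k : nat) : bool :=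
  r k + DL <= ti.

Definition legal_exec (R : archiRealFieldType) (CL CH DL ti : R) (r : nat -> R)
    (c : nat -> R) : Prop :=
  forall k : nat, 0 <= c k /\ c k <= (if lc_job DL ti r k then CL else CH).

Definition job_demand (R : archiRealFieldType) (D DL ti t : R) (r : nat -> R)
    (c : nat -> R) (k : nat) : R :=
  if lc_job DL ti r k then (if r k + DL <= t then c k else 0)
  else (if r k + D <= t then c k else 0).

(* Demand during [0,t).  Since r k >= k * T, every job with index
   k > t / T is released after t and contributes nothing, so summing over
   the first truncn (t / T) + 1 jobs covers all jobs. *)
Definition demand (R : archiRealFieldType) (T D DL ti t : R) (r : nat -> R)
    (c : nat -> R) : R :=
  \sum_(k < (Num.truncn (t / T)).+1) job_demand D DL ti t r c k.

Definition pattern (R : archiRealFieldType) (T D t : R) : nat -> R :=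
  fun k => t - D - (Num.floor ((t - D) / T))%:~R * T + k%:R * T.

(* Main.v *)
Require Import Defs.
From mathcomp Require Import all_boot all_order all_algebra.
From mathcomp Require Import lra zify.
Import Order.TTheory GRing.Theory Num.Theory.
Local Open Scope ring_scope.

Lemma floor_nat (R : archiRealFieldType) (x : R) : 0 <= x ->
  (Num.floor x)%:~R = (Num.truncn x)%:R :> R.
Proof.
move=> x0; have /andP[h1 h2] := truncn_itv x0.
have -> : Num.floor x = (Num.truncn x)%:Z.
  apply: floor_def; rewrite intrD -!pmulrn h1 /=.
  by rewrite -natr1 in h2.
by rewrite -pmulrn.
Qed.

Lemma natA (k m n : nat) : (k <= m)%N -> (m <= n)%N -> (k + (n - m) <= n)%N.
Proof. lia. Qed.
Lemma natB (k m n : nat) : (k <= m)%N -> (m <= n)%N -> (k + (n - m) + (m - k) = n)%N.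
Proof. lia. Qed.
Lemma natC (m n : nat) : (m <= n)%N -> (n.+1 - (n - m) = m.+1)%N.
Proof. lia. Qed.

Theorem lemma3 (R : archiRealFieldType) (T D DL CL CH ti t : R) :
  0 < T -> 0 < DL -> DL <= D -> D <= T ->
  0 <= CL -> CL < CH ->
  0 <= ti -> ti <= t -> D <= t - ti ->
  legal_release T (pattern T D t) /\
  exists c0 : nat -> R,
    legal_exec CL CH DL ti (pattern T D t) c0 /\
    forall (r c : nat -> R),
      legal_release T r -> legal_exec CL CH DL ti r c ->
      demand T D DL ti t r c <= demand T D DL ti t (pattern T D t) c0.
Proof.
move=> T0 DL0 DLD DT CL0 CLH ti0 tit Dtt.
have tD0 : 0 <= t - D by lra.
have x0 : 0 <= (t - D) / T by rewrite divr_ge0 // ltW.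
set n := Num.truncn ((t - D) / T).
have /andP[hn1 hn2] := truncn_itv x0.
rewrite -/n ler_pdivlMr // ltr_pdivrMr // in hn1 hn2.
have patE : forall k, pattern T D t k = t - D - n%:R * T + k%:R * T.
  by move=> k; rewrite /pattern floor_nat.
have nT0 : 0 <= n%:R * T by rewrite mulr_ge0 // ltW.
split.
  split; first by rewrite patE mul0r addr0; lra.
  move=> k; rewrite !patE -natr1 mulrDl mul1r; lra.
set c0 := fun k => if lc_job DL ti (pattern T D t) k then CL else CH.
exists c0; split.
  by move=> k; rewrite /c0; case: ifP => _; lra.
move=> r c [r0 rinc] hc.
have rge : forall i d, r i + d%:R * T <= r (i + d)%N.
  move=> i; elim=> [|d IH]; first by rewrite mul0r addr0 addn0.
  rewrite addnS -natr1 mulrDl mul1r; have := rinc (i + d)%N; lra.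
have rk : forall k, k%:R * T <= r k.
  by move=> k; have := rge 0%N k; rewrite add0n; lra.
set M := (Num.truncn (t / T)).+1.
have nM : (n < M)%N.
  rewrite ltnS; apply: le_truncn; rewrite ler_pM2r ?invr_gt0 //; lra.
set f := fun k => job_demand D DL ti t r c k.
set g := fun k => job_demand D DL ti t (pattern T D t) c0 k.
have hg0 : forall k, 0 <= g k.
  by move=> k; rewrite /g /job_demand /c0; repeat case: ifP => _; lra.
have hf : forall k, f k <= if r k <= t - D then
    (if lc_job DL ti r k then CL else CH) else 0.
  move=> k; rewrite /f /job_demand; have [c0k ck] := hc k.
  case lc: (lc_job DL ti r k) ck => ck; rewrite /lc_job in lc.
    have -> : r k <= t - D by lra.
    by case: ifP => _; lra.
  have -> : (r k + D <= t) = (r k <= t - D) by rewrite lerBrDr.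
  by case: ifP => _; lra.
have hgn : forall k, (k <= n)%N -> g k = c0 k.
  move=> k kn; rewrite /g /job_demand; case: ifP => lc.
    by rewrite ifT //; rewrite /lc_job in lc; lra.
  rewrite ifT // patE.
  have : k%:R * T <= n%:R * T by rewrite ler_pM2r // ler_nat.
  lra.
have hrn : forall k, r k <= t - D -> (k <= n)%N.
  move=> k h; rewrite leqNgt; apply/negP => nk.
  have : n.+1%:R * T <= k%:R * T by rewrite ler_pM2r // ler_nat.
  have := rk k; lra.
rewrite /demand -/M.
rewrite (_ : \sum_(k < M) job_demand D DL ti t r c k = \sum_(k < M) f k) //.
rewrite (_ : \sum_(k < M) job_demand D DL ti t (pattern T D t) c0 k = \sum_(k < M) g k) //.
have sg0 : forall a b, 0 <= \sum_(a <= k < b) g k.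
  by move=> a b; apply: sumr_ge0 => k _.
case: (boolP (r 0%N <= t - D)) => h0; last first.
  apply: (@le_trans _ _ 0); last by apply: sumr_ge0 => k _.
  apply: (big_ind (fun x => x <= 0)) => //; first by move=> *; lra.
  move=> k _; have := hf k; rewrite ifF //.
  apply/negbTE; move: h0; apply: contra => h.
  have := rge 0%N k; rewrite add0n.
  have : 0 <= k%:R * T by rewrite mulr_ge0 // ltW.
  lra.
have exP : exists i, (fun k => (k <= n)%N && (r k <= t - D)) i.
  by exists 0%N; rewrite /= h0.
have ubP : forall i, (fun k => (k <= n)%N && (r k <= t - D)) i -> (i <= n)%N.
  by move=> i /andP[].
case: (ex_maxnP exP ubP) => m /andP[mn rm] maxm.
have hfm : forall k, (m < k)%N -> f k <= 0.
  move=> k mk; have := hf k; case: ifP => // h.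
  have : (k <= m)%N by apply: maxm; apply/andP; split=> //; exact: hrn.
  by rewrite leqNgt mk.
have hfg : forall k, (k <= m)%N -> f k <= g (k + (n - m))%N.
  move=> k km; set j := (k + (n - m))%N.
  have jn : (j <= n)%N by exact: natA.
  have e : (j + (m - k) = n)%N by exact: natB.
  have pj : pattern T D t j + (m - k)%:R * T = t - D.
    by rewrite patE -addrA -mulrDl -natrD e subrK.
  have rkm : r k + (m - k)%:R * T <= r m.
    by have := rge k (m - k)%N; rewrite subnKC.
  have rkj : r k <= pattern T D t j by lra.
  rewrite hgn // /c0; have := hf k; rewrite /lc_job.
  case: ifP => _; last by case: ifP => _; lra.
  by case: ifP => a; case: ifP => b; lra.
have mM : (m.+1 <= M)%N by apply: leq_ltn_trans nM.
rewrite -(big_mkord xpredT f) -(big_mkord xpredT g).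
rewrite (big_cat_nat _ (n:=m.+1)) //=.
have s2 : \sum_(m.+1 <= k < M) f k <= 0.
  rewrite big_nat_cond; apply: (big_ind (fun x => x <= 0)) => //.
    by move=> *; lra.
  by move=> k /andP[/andP[mk _] _]; apply: hfm.
have s1 : \sum_(0 <= k < m.+1) f k <= \sum_(0 <= k < m.+1) g (k + (n - m))%N.
  by apply: ler_sum_nat => k /andP[_ km]; apply: hfg.
have e1 : \sum_(0 <= k < m.+1) g (k + (n - m))%N =
          \sum_(0 + (n - m) <= k < n.+1) g k.
  by rewrite big_addn natC.
rewrite add0n in e1.
rewrite (big_cat_nat _ (n:=(n - m)%N) (m:=0%N) (p:=M)) //=; last by apply: leq_trans (leq_subr _ _) (ltnW nM).
rewrite (big_cat_nat _ (n:=n.+1) (m:=(n - m)%N) (p:=M)) //=; try exact: nM; try exact: leq_trans (leq_subr _ _) (leqnSn _).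
have := sg0 0%N (n - m)%N; have := sg0 n.+1 M.
lra.
Qed.
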